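(* Let $p\in(1,\infty)$. Define $F_p:\mathbb{C}\to\mathbb{C}$ by $F_p(z)=z\,|z|^{p-2}$ for $z\neq 0$ and $F_p(0)=0$. Let $\varphi_p:=\arcsin|1-\tfrac{2}{p}|$ and \[ \Sigma_p:=\{z\in\mathbb{C}\setminus\{0\}: |\arg z|\le \varphi_p\}\cup\{0\}. \] Then \[ \overline{\{(w-z)\cdot\overline{(F_p(w)-F_p(z))} : z,w\in\mathbb{C}\}}=\Sigma_p, \] where the bar over the set denotes the closure in $\mathbb{C}$ and the bar over $F_p(w)-F_p(z)$ denotes complex conjugation.
   Context: $\arg$ denotes the principal argument, with values in $(-\pi,\pi]$. *)

(* Defs.v *)
From Stdlib Require Import Reals.
From Coquelicot Require Import Coquelicot.
Open Scope R_scope.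

(* Principal argument Arg z in (-PI, PI] for z <> 0 (value at 0 irrelevant). *)
Definition Carg (z : C) : R :=
  if Rle_dec 0 (Im z) then acos (Re z / Cmod z) else - acos (Re z / Cmod z).

Definition Fp (p : R) (z : C) : C :=
  if Ceq_dec z 0%C then 0%C else Cmult z (RtoC (Rpower (Cmod z) (p - 2))).

Definition phi_p (p : R) : R := asin (Rabs (1 - 2 / p)).

Definition Sigma_p (p : R) (z : C) : Prop :=
  (z <> 0%C /\ Rabs (Carg z) <= phi_p p) \/ z = 0%C.

Definition Wp (p : R) (u : C) : Prop :=
  exists z w : C, u = Cmult (Cminus w z) (Cconj (Cminus (Fp p w) (Fp p z))).

Definition Cclosure (S : C -> Prop) (u : C) : Prop :=
  forall eps : R, 0 < eps -> exists s : C, S s /\ Cmod (Cminus s u) < eps.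

(* Main.v *)
Require Import Defs.
From Stdlib Require Import Reals Lra Psatz.
From Coquelicot Require Import Coquelicot.
Open Scope R_scope.


Lemma exp_le_mono a b : a <= b -> exp a <= exp b.
Proof. intros H; destruct (Rle_lt_or_eq_dec a b H) as [h|h]; [apply Rlt_le, exp_increasing, h| subst; lra]. Qed.

Lemma cosh_mono a b : b^2 <= a^2 -> exp b + exp (-b) <= exp a + exp (-a).
Proof.
  intros H.
  assert (HA : exp a + exp (-a) = exp (Rabs a) + exp (- Rabs a)).
  { unfold Rabs; destruct (Rcase_abs a); [rewrite Ropp_involutive; lra| lra]. }
  rewrite HA.
  assert (Hb : - Rabs a <= b <= Rabs a).
  { assert (Rabs b <= Rabs a).
    { apply Rsqr_le_abs_0. unfold Rsqr. nra. }
    split; [ | apply Rle_trans with (Rabs b); [apply Rle_abs|exact H0] ].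
    pose proof (Rle_abs (-b)). rewrite Rabs_Ropp in H1. lra. }
  set (A := Rabs a) in *.
  assert (E1 : exp A * exp (-A) = 1) by (rewrite <- exp_plus; replace (A + -A) with 0 by ring; apply exp_0).
  assert (E2 : exp b * exp (-b) = 1) by (rewrite <- exp_plus; replace (b + -b) with 0 by ring; apply exp_0).
  assert (E3 : exp b <= exp A) by (apply exp_le_mono; lra).
  assert (E4 : exp (-A) * exp (-b) <= 1).
  { rewrite <- exp_plus. rewrite <- exp_0. apply exp_le_mono. lra. }
  pose proof (exp_pos A). pose proof (exp_pos b). pose proof (exp_pos (-A)). pose proof (exp_pos (-b)).
  nra.
Qed.

Definition gfun p x := (p-2)^2*(exp(p*x)+exp(-(p*x))) - p^2*(exp((p-2)*x)+exp(-((p-2)*x))) + 8*(p-1).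
Definition mfun p x := p*(p-2)^2*(exp(p*x) - exp(-(p*x))) - p^2*(p-2)*(exp((p-2)*x) - exp(-((p-2)*x))).
Definition m'fun p x := p^2*(p-2)^2*(exp(p*x) + exp(-(p*x)) - exp((p-2)*x) - exp(-((p-2)*x))).

Lemma g_der p x : is_derive (gfun p) x (mfun p x).
Proof. unfold gfun, mfun. auto_derive. auto. ring. Qed.
Lemma m_der p x : is_derive (mfun p) x (m'fun p x).
Proof. unfold m'fun, mfun. auto_derive. auto. ring. Qed.

Lemma m'_nonneg p x : 1 < p -> 0 <= m'fun p x.
Proof.
  intros hp. unfold m'fun.
  assert (((p-2)*x)^2 <= (p*x)^2).
  { assert (0 <= (p-1)*x^2) by (apply Rmult_le_pos; [lra| apply pow2_ge_0]). nra. }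
  pose proof (cosh_mono (p*x) ((p-2)*x) H).
  apply Rmult_le_pos.
  - apply Rmult_le_pos; apply pow2_ge_0.
  - lra.
Qed.

Lemma mono_sign (f f' : R -> R) :
  (forall x, is_derive f x (f' x)) -> f 0 = 0 ->
  (forall x, 0 <= f' x) -> forall y, 0 <= f y * y.
Proof.
  intros Hd H0 Hs y.
  destruct (Rtotal_order 0 y) as [Hy|[Hy|Hy]].
  - destruct (MVT_cor2 f f' 0 y Hy) as [c [Hc Hc2]].
    { intros c _. apply is_derive_Reals, Hd. }
    specialize (Hs c). rewrite H0 in Hc. nra.
  - subst; lra.
  - destruct (MVT_cor2 f f' y 0 Hy) as [c [Hc Hc2]].
    { intros c _. apply is_derive_Reals, Hd. }
    specialize (Hs c). rewrite H0 in Hc. nra.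
Qed.

Lemma m_sign p : 1 < p -> forall y, 0 <= mfun p y * y.
Proof.
  intros hp. apply mono_sign with (m'fun p).
  - apply m_der.
  - unfold mfun. rewrite !Rmult_0_r, Ropp_0, exp_0. ring.
  - intros x. exact (m'_nonneg p x hp).
Qed.

Lemma g_nonneg p : 1 < p -> forall y, 0 <= gfun p y.
Proof.
  intros hp y.
  assert (G0 : gfun p 0 = 0) by (unfold gfun; rewrite !Rmult_0_r, Ropp_0, exp_0; ring).
  destruct (Rtotal_order 0 y) as [Hy|[Hy|Hy]].
  - destruct (MVT_cor2 (gfun p) (mfun p) 0 y Hy) as [c [Hc Hc2]].
    { intros c _. apply is_derive_Reals, g_der. }
    pose proof (m_sign p hp c). rewrite G0 in Hc.
    assert (0 <= mfun p c) by (apply Rmult_le_reg_r with c; lra).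
    nra.
  - subst; lra.
  - destruct (MVT_cor2 (gfun p) (mfun p) y 0 Hy) as [c [Hc Hc2]].
    { intros c _. apply is_derive_Reals, g_der. }
    pose proof (m_sign p hp c). rewrite G0 in Hc.
    assert (mfun p c <= 0).
    { destruct (Rle_dec (mfun p c) 0); auto. nra. }
    nra.
Qed.

Definition cc p := cos (phi_p p).

Lemma y_bounds p : 1 < p -> 0 <= Rabs (1 - 2/p) < 1.
Proof.
  intros hp. split; [apply Rabs_pos|].
  assert (0 < 2/p < 2) by (split; [apply Rdiv_lt_0_compat; lra| apply Rmult_lt_reg_r with p; [lra|]; unfold Rdiv; rewrite Rmult_assoc, Rinv_l; lra]).
  unfold Rabs; destruct (Rcase_abs _); lra.
Qed.

Lemma phi_bounds p : 1 < p -> 0 <= phi_p p <= PI/2.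
Proof.
  intros hp. pose proof (y_bounds p hp). unfold phi_p.
  pose proof (asin_bound (Rabs (1-2/p))). split; [|lra].
  apply sin_incr_0; try lra. rewrite sin_0, sin_asin; lra.
Qed.

Lemma cc_facts p : 1 < p -> 0 < cc p /\ cc p <= 1 /\ (cc p)^2 * p^2 = 4*(p-1).
Proof.
  intros hp. pose proof (y_bounds p hp) as Hy. unfold cc, phi_p.
  rewrite cos_asin by lra.
  set (y := Rabs (1 - 2/p)) in *.
  assert (Hy2 : y^2 = (1-2/p)^2) by (unfold y; apply pow2_abs).
  assert (H1 : 0 < 1 - y²) by (unfold Rsqr; nra).
  split; [apply sqrt_lt_R0; exact H1|].
  split.
  - apply Rle_trans with (sqrt 1); [apply sqrt_le_1_alt; unfold Rsqr; nra| rewrite sqrt_1; lra].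
  - rewrite <- Rsqr_pow2, Rsqr_sqrt by lra. unfold Rsqr.
    replace (y*y) with (y^2) by ring. rewrite Hy2. field. lra.
Qed.

Lemma acos_le_iff x c : -1 <= x <= 1 -> -1 <= c <= 1 -> (acos x <= acos c <-> c <= x).
Proof.
  intros Hx Hc. pose proof (acos_bound x). pose proof (acos_bound c).
  split; intros H1.
  - destruct (Rle_dec c x) as [h|h]; auto. exfalso.
    destruct (Rle_lt_or_eq_dec _ _ H1) as [h2|h2].
    + pose proof (cos_decreasing_1 (acos x) (acos c) ltac:(lra) ltac:(lra) ltac:(lra) ltac:(lra) h2) as H3.
      rewrite !cos_acos in H3 by lra. lra.
    + assert (H3 : cos (acos x) = cos (acos c)) by (rewrite h2; reflexivity).
      rewrite !cos_acos in H3 by lra. lra.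
  - destruct (Rle_dec (acos x) (acos c)) as [h|h]; auto. exfalso.
    pose proof (cos_decreasing_1 (acos c) (acos x) ltac:(lra) ltac:(lra) ltac:(lra) ltac:(lra) ltac:(lra)) as H3.
    rewrite !cos_acos in H3 by lra. lra.
Qed.

Definition Pp p (u : C) := cc p * Cmod u <= fst u.

Lemma Sigma_iff p u : 1 < p -> (Sigma_p p u <-> Pp p u).
Proof.
  intros hp. pose proof (cc_facts p hp) as [Hc0 [Hc1 Hc2]].
  destruct (Ceq_dec u 0) as [Hu|Hu].
  - subst. unfold Sigma_p, Pp. rewrite Cmod_0. simpl. split; [intros; lra| auto].
  - assert (Hm : 0 < Cmod u) by (apply Cmod_gt_0; exact Hu).
    pose proof (re_le_Cmod u) as Hre.
    assert (Hx : -1 <= Re u / Cmod u <= 1).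
    { unfold Rabs in Hre; destruct (Rcase_abs (Re u)); split;
      (apply Rmult_le_reg_r with (Cmod u); [lra|]; unfold Rdiv; rewrite Rmult_assoc, Rinv_l; lra). }
    assert (HA : Rabs (Carg u) = acos (Re u / Cmod u)).
    { pose proof (acos_bound (Re u / Cmod u)). unfold Carg.
      destruct (Rle_dec 0 (Im u)); [rewrite Rabs_right by lra| rewrite Rabs_Ropp, Rabs_right by lra]; reflexivity. }
    assert (HP : phi_p p = acos (cc p)).
    { unfold cc. rewrite acos_cos; auto. pose proof (phi_bounds p hp). pose proof PI_RGT_0. lra. }
    unfold Sigma_p, Pp. rewrite HA, HP, acos_le_iff by lra. unfold Re in *.
    split.
    + intros [[_ H]|H]; [|contradiction].
      apply Rmult_le_reg_r with (/ Cmod u); [apply Rinv_0_lt_compat; lra|].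
      rewrite Rmult_assoc, Rinv_r by lra. unfold Rdiv in H. lra.
    + intros H. left. split; auto.
      apply Rmult_le_reg_r with (Cmod u); [lra|]. unfold Rdiv; rewrite Rmult_assoc, Rinv_l; lra.
Qed.

Lemma Pp_iff p u : 1 < p -> (Pp p u <-> 0 <= fst u /\ 4*(p-1)*(snd u)^2 <= (p-2)^2*(fst u)^2).
Proof.
  intros hp. pose proof (cc_facts p hp) as [Hc0 [Hc1 Hc2]].
  unfold Pp, Cmod. set (m := sqrt (fst u ^ 2 + snd u ^ 2)).
  assert (Hm0 : 0 <= m) by apply sqrt_pos.
  assert (Hm2 : m^2 = fst u ^2 + snd u^2).
  { unfold m. rewrite <- Rsqr_pow2, Rsqr_sqrt; [ring|]. nra. }
  assert (Hp2 : 0 < p^2) by nra.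
  split.
  - intros H. assert (Hcm : 0 <= cc p * m) by (apply Rmult_le_pos; lra).
    assert (0 <= fst u) by lra. split; auto.
    assert (H3 : (cc p * m)^2 <= (fst u)^2) by (apply pow_incr; lra).
    assert (H4 : (cc p * m)^2 * p^2 <= (fst u)^2 * p^2) by (apply Rmult_le_compat_r; lra).
    replace ((cc p * m)^2 * p^2) with ((cc p ^2 * p^2) * m^2) in H4 by ring. rewrite Hc2, Hm2 in H4.
    nra.
  - intros [H1 H2].
    assert ((cc p * m)^2 * p^2 <= (fst u)^2 * p^2).
    { replace ((cc p * m)^2 * p^2) with ((cc p ^2 * p^2) * m^2) by ring. rewrite Hc2, Hm2. nra. }
    assert (H4 : (cc p * m)^2 <= (fst u)^2) by (apply Rmult_le_reg_r with (p^2); lra).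
    assert (Hcm : 0 <= cc p * m) by (apply Rmult_le_pos; lra).
    destruct (Rle_dec (cc p * m) (fst u)) as [h|h]; auto. exfalso.
    assert ((fst u)^2 < (cc p * m)^2) by (apply Rsqr_incrst_1 in h; [unfold Rsqr in h; lra| lra | lra] || nra). lra.
Qed.

Lemma exp_k_diff k R r : 0 < R -> 0 < r -> exp (k * (ln R - ln r)) = Rpower R k / Rpower r k.
Proof.
  intros. unfold Rpower. replace (k * (ln R - ln r)) with (k * ln R + - (k * ln r)) by ring.
  rewrite exp_plus, exp_Ropp. reflexivity.
Qed.

Lemma exp_k_diff' k R r : 0 < R -> 0 < r -> exp (- (k * (ln R - ln r))) = Rpower r k / Rpower R k.
Proof.
  intros. replace (- (k * (ln R - ln r))) with (k * (ln r - ln R)) by ring. apply exp_k_diff; auto.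
Qed.

Lemma Rpower_p p R : 0 < R -> Rpower R p = Rpower R (p-2) * R^2.
Proof.
  intros. replace p with ((p-2) + INR 2) at 1 by (simpl; ring).
  rewrite Rpower_plus, Rpower_pow; auto.
Qed.

Lemma K_ineq p R r : 1 < p -> 0 < R -> 0 < r ->
  let a := Rpower R (p-2) in let b := Rpower r (p-2) in
  0 <= (p-2)^2*(a^2*R^4 + b^2*r^4) - p^2*R^2*r^2*(a^2+b^2) + 8*(p-1)*a*b*R^2*r^2.
Proof.
  intros hp HR Hr a b.
  pose proof (g_nonneg p hp (ln R - ln r)) as G. unfold gfun in G.
  assert (Ha : 0 < a) by apply exp_pos. assert (Hb : 0 < b) by apply exp_pos.
  rewrite !exp_k_diff' in G by auto.
  rewrite !exp_k_diff in G by auto.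
  rewrite (Rpower_p p R), (Rpower_p p r) in G by auto.
  fold a b in G.
  assert (E : (p-2)^2*(a^2*R^4 + b^2*r^4) - p^2*R^2*r^2*(a^2+b^2) + 8*(p-1)*a*b*R^2*r^2 =
   ((p - 2) ^ 2 * (a * R ^ 2 / (b * r ^ 2) + b * r ^ 2 / (a * R ^ 2)) -
       p ^ 2 * (a / b + b / a) + 8 * (p - 1)) * (a*b*R^2*r^2)).
  { field. split; [lra|]. split; [lra|]. split; lra. }
  rewrite E. apply Rmult_le_pos; auto.
  repeat apply Rmult_le_pos; try lra; apply pow_le; lra.
Qed.

Lemma core_ineq p a b R r X Y : 1 < p -> 0 < R -> 0 < r -> 0 < a -> 0 < b ->
  X^2 + Y^2 = R^2*r^2 ->
  0 <= (p-2)^2*(a^2*R^4 + b^2*r^4) - p^2*R^2*r^2*(a^2+b^2) + 8*(p-1)*a*b*R^2*r^2 ->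
  0 <= (R - r)*(a*R - b*r) ->
  0 <= a*R^2 + b*r^2 - (a+b)*X /\
  4*(p-1)*((a-b)*Y)^2 <= (p-2)^2*(a*R^2 + b*r^2 - (a+b)*X)^2.
Proof.
  intros hp HR Hr Ha Hb HXY HK Hm.
  set (M := R*r). assert (HM : 0 < M) by (unfold M; nra).
  assert (HX : X <= M).
  { destruct (Rle_dec X M) as [h|h]; auto. assert (M*M < X*X) by (apply Rmult_le_0_lt_compat; lra).
    assert (HM2 : M*M = R^2*r^2) by (unfold M; ring).
    assert (0 <= Y^2) by apply pow2_ge_0.
    replace (X^2) with (X*X) in HXY by ring. lra. }
  set (A := a*R^2 + b*r^2). set (B := a+b).
  assert (Hre : 0 <= A - B*X).
  { assert (A - B*X = (R-r)*(a*R - b*r) + B*(M - X)) by (unfold A, B, M; ring).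
    assert (0 <= B*(M-X)) by (apply Rmult_le_pos; unfold B; lra). lra. }
  split; [exact Hre|].
  assert (Id : (A - B*X)^2 * M^2 - (A^2 - B^2*M^2)*(M^2 - X^2) = (A*X - B*M^2)^2) by ring.
  assert (HY : M^2 - X^2 = Y^2) by (unfold M; nra).
  rewrite HY in Id.
  assert (H1 : (A^2 - B^2*M^2) * Y^2 <= (A - B*X)^2 * M^2).
  { assert (0 <= (A*X - B*M^2)^2) by apply pow2_ge_0. lra. }
  assert (HK2 : (p-2)^2*(A^2 - B^2*M^2) = ((p-2)^2*(a^2*R^4 + b^2*r^4) - p^2*R^2*r^2*(a^2+b^2) + 8*(p-1)*a*b*R^2*r^2) + 4*(p-1)*(a-b)^2*M^2)
    by (unfold A, B, M; ring).
  assert (H2 : 4*(p-1)*(a-b)^2*M^2*Y^2 <= (p-2)^2*(A - B*X)^2 * M^2).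
  { assert (H3 : (p-2)^2 * ((A^2 - B^2*M^2) * Y^2) <= (p-2)^2*((A - B*X)^2 * M^2))
      by (apply Rmult_le_compat_l; [apply pow2_ge_0| exact H1]).
    assert (H4 : 0 <= ((p-2)^2*(a^2*R^4 + b^2*r^4) - p^2*R^2*r^2*(a^2+b^2) + 8*(p-1)*a*b*R^2*r^2) * Y^2)
      by (apply Rmult_le_pos; [exact HK| apply pow2_ge_0]).
    replace ((p-2)^2 * ((A^2 - B^2*M^2) * Y^2)) with (((p-2)^2*(A^2 - B^2*M^2)) * Y^2) in H3 by ring.
    rewrite HK2 in H3. lra. }
  assert (HM2 : 0 < M^2) by nra.
  apply Rmult_le_reg_r with (M^2); [exact HM2|].
  replace (4 * (p - 1) * ((a - b) * Y) ^ 2 * M^2) with (4*(p-1)*(a-b)^2*M^2*Y^2) by ring.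
  lra.
Qed.

Lemma Fp_comp p z : exists b, 0 <= b /\ Fp p z = (b * fst z, b * snd z) /\ (z <> 0%C -> b = Rpower (Cmod z) (p-2)).
Proof.
  unfold Fp. destruct (Ceq_dec z 0) as [h|h].
  - exists 0. split; [lra|]. split; [|intros; contradiction].
    subst. apply injective_projections; simpl; ring.
  - exists (Rpower (Cmod z) (p-2)). split; [left; apply exp_pos|]. split; auto.
    apply injective_projections; simpl; ring.
Qed.

Lemma Rpower_base_mono x y k : 0 < x -> x <= y -> 0 <= k -> Rpower x k <= Rpower y k.
Proof.
  intros. unfold Rpower. destruct (Rle_lt_or_eq_dec _ _ H0) as [h|h]; [|subst; lra].
  assert (ln x <= ln y) by (apply ln_le; lra).
  destruct (Rle_lt_or_eq_dec _ _ (Rmult_le_compat_l k _ _ H1 H2)) as [h2|h2].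
  - left. apply exp_increasing. exact h2.
  - rewrite h2. lra.
Qed.

Lemma mono_cond p R r : 1 < p -> 0 < R -> 0 < r ->
  0 <= (R - r) * (Rpower R (p-2) * R - Rpower r (p-2) * r).
Proof.
  intros hp HR Hr.
  assert (E : forall x, 0 < x -> Rpower x (p-2) * x = Rpower x (p-1)).
  { intros x Hx. rewrite <- (Rpower_1 x) at 2 by exact Hx. rewrite <- Rpower_plus. f_equal; ring. }
  rewrite !E by auto.
  destruct (Rle_dec R r).
  - pose proof (Rpower_base_mono R r (p-1) HR r0 ltac:(lra)). nra.
  - pose proof (Rpower_base_mono r R (p-1) Hr ltac:(lra) ltac:(lra)). nra.
Qed.

Lemma Cmod_sq (z : C) : (Cmod z)^2 = fst z ^2 + snd z ^2.
Proof. unfold Cmod. rewrite <- Rsqr_pow2, Rsqr_sqrt; [ring|]. nra. Qed.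

Lemma Wp_P p u : 1 < p -> Wp p u -> Pp p u.
Proof.
  intros hp [z [w Hu]].
  destruct (Fp_comp p z) as [b [Hb0 [Hbz Hbz']]].
  destruct (Fp_comp p w) as [a [Ha0 [Haw Haw']]].
  apply Pp_iff; auto. subst u. rewrite Hbz, Haw.
  assert (Q : forall X : R, 0 <= (p-2)^2 * X^2) by (intros; apply Rmult_le_pos; apply pow2_ge_0).
  destruct (Ceq_dec z 0) as [hz|hz]; [|destruct (Ceq_dec w 0) as [hw|hw]].
  - subst z. destruct w as [w1 w2]. unfold Cminus, Cmult, Cconj, Cplus, Copp, RtoC; cbn [fst snd].
    split.
    + assert (0 <= a * (w1^2 + w2^2)) by (apply Rmult_le_pos; [lra| pose proof (pow2_ge_0 w1); pose proof (pow2_ge_0 w2); lra]).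
      replace ((w1 + - 0) * (a * w1 + - (b * 0)) - (w2 + - 0) * - (a * w2 + - (b * 0))) with (a * (w1^2 + w2^2)) by ring. lra.
    + replace ((w1 + - 0) * - (a * w2 + - (b * 0)) + (w2 + - 0) * (a * w1 + - (b * 0))) with 0 by ring.
      replace (4 * (p - 1) * 0 ^ 2) with 0 by ring. apply Q.
  - subst w. destruct z as [z1 z2]. unfold Cminus, Cmult, Cconj, Cplus, Copp, RtoC; cbn [fst snd].
    split.
    + assert (0 <= b * (z1^2 + z2^2)) by (apply Rmult_le_pos; [lra| pose proof (pow2_ge_0 z1); pose proof (pow2_ge_0 z2); lra]).
      replace ((0 + - z1) * (a * 0 + - (b * z1)) - (0 + - z2) * - (a * 0 + - (b * z2))) with (b * (z1^2 + z2^2)) by ring. lra.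
    + replace ((0 + - z1) * - (a * 0 + - (b * z2)) + (0 + - z2) * (a * 0 + - (b * z1))) with 0 by ring.
      replace (4 * (p - 1) * 0 ^ 2) with 0 by ring. apply Q.
  - specialize (Hbz' hz). specialize (Haw' hw).
    assert (HR : 0 < Cmod w) by (apply Cmod_gt_0; exact hw).
    assert (Hr : 0 < Cmod z) by (apply Cmod_gt_0; exact hz).
    pose proof (Cmod_sq w) as HR2. pose proof (Cmod_sq z) as Hr2.
    pose proof (K_ineq p (Cmod w) (Cmod z) hp HR Hr) as HK. cbv zeta in HK. rewrite <- Haw', <- Hbz' in HK.
    pose proof (mono_cond p (Cmod w) (Cmod z) hp HR Hr) as HM. rewrite <- Haw', <- Hbz' in HM.
    assert (Ha : 0 < a) by (rewrite Haw'; apply exp_pos).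
    assert (Hb : 0 < b) by (rewrite Hbz'; apply exp_pos).
    set (R := Cmod w) in *. set (r := Cmod z) in *.
    destruct z as [z1 z2], w as [w1 w2]. unfold Cminus, Cmult, Cconj, Cplus, Copp, RtoC; cbn [fst snd] in *.
    assert (HXY : (w1*z1 + w2*z2)^2 + (z1*w2 - z2*w1)^2 = R^2*r^2) by (rewrite HR2, Hr2; ring).
    destruct (core_ineq p a b R r (w1*z1 + w2*z2) (z1*w2 - z2*w1) hp HR Hr Ha Hb HXY HK HM) as [C1 C2].
    assert (E1 : (w1 + - z1) * (a * w1 + - (b * z1)) - (w2 + - z2) * - (a * w2 + - (b * z2))
                 = a * R ^ 2 + b * r ^ 2 - (a + b) * (w1 * z1 + w2 * z2)) by (rewrite HR2, Hr2; ring).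
    assert (E2 : (w1 + - z1) * - (a * w2 + - (b * z2)) + (w2 + - z2) * (a * w1 + - (b * z1))
                 = (a - b) * (z1 * w2 - z2 * w1)) by ring.
    rewrite E1, E2. split; auto.
Qed.

Lemma closure_P p u : 1 < p -> Cclosure (Wp p) u -> Pp p u.
Proof.
  intros hp Hcl. pose proof (cc_facts p hp) as [Hc0 [Hc1 Hc2]].
  unfold Pp. destruct (Rle_dec (cc p * Cmod u) (fst u)) as [h|h]; auto. exfalso.
  set (eps := (cc p * Cmod u - fst u) / (2 * (1 + cc p))).
  assert (Heps : 0 < eps) by (unfold eps; apply Rdiv_lt_0_compat; lra).
  destruct (Hcl eps Heps) as [s [Hs Hsu]].
  pose proof (Wp_P p s hp Hs) as Ps. unfold Pp in Ps.
  pose proof (re_le_Cmod (Cminus s u)) as H1.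
  assert (E1 : Re (Cminus s u) = fst s - fst u) by (unfold Re, Cminus, Cplus, Copp; simpl; ring).
  rewrite E1 in H1.
  assert (E2 : u = Cplus s (Copp (Cminus s u))) by (apply injective_projections; unfold Cminus, Cplus, Copp; simpl; ring).
  pose proof (Cmod_triangle s (Copp (Cminus s u))) as H2. rewrite <- E2, Cmod_opp in H2.
  assert (H3 : eps * (2 * (1 + cc p)) = cc p * Cmod u - fst u) by (unfold eps; field; lra).
  pose proof (Rle_abs (fst s - fst u)).
  assert (cc p * Cmod u <= cc p * Cmod s + cc p * Cmod (Cminus s u)) by (rewrite <- Rmult_plus_distr_l; apply Rmult_le_compat_l; lra).
  assert (cc p * Cmod (Cminus s u) <= cc p * eps) by (apply Rmult_le_compat_l; lra).
  lra.
Qed.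

Lemma Rpower_shift k q : 0 < k -> k * Rpower k q = Rpower k (q+1).
Proof. intros. rewrite Rpower_plus, Rpower_1 by auto. ring. Qed.

Lemma Fp_scale p k z : 0 < k -> Fp p (Cmult (RtoC k) z) =
  (Rpower k (p-1) * fst (Fp p z), Rpower k (p-1) * snd (Fp p z)).
Proof.
  intros Hk.
  destruct (Fp_comp p z) as [b [Hb0 [Hbz Hbz']]].
  destruct (Fp_comp p (Cmult (RtoC k) z)) as [b' [Hb0' [Hbz2 Hbz2']]].
  rewrite Hbz, Hbz2. destruct (Ceq_dec z 0) as [h|h].
  - subst z. unfold Cmult, RtoC; cbn [fst snd]. apply injective_projections; cbn [fst snd]; ring.
  - assert (hk : Cmult (RtoC k) z <> 0%C).
    { intros E. apply h. assert (E2 : Cmod (Cmult (RtoC k) z) = 0) by (rewrite E; apply Cmod_0).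
      rewrite Cmod_mult, Cmod_R, Rabs_right in E2 by lra. apply Cmod_eq_0.
      apply Rmult_eq_reg_l with k; lra. }
    specialize (Hbz' h). specialize (Hbz2' hk).
    rewrite Cmod_mult, Cmod_R, Rabs_right in Hbz2' by lra.
    rewrite <- Rpower_mult_distr in Hbz2' by (try lra; apply Cmod_gt_0; auto).
    rewrite <- Hbz' in Hbz2'.
    assert (E : Rpower k (p-1) = k * Rpower k (p-2)) by (rewrite Rpower_shift by lra; f_equal; ring).
    rewrite E, Hbz2'. destruct z as [z1 z2]. unfold Cmult, RtoC; cbn [fst snd].
    apply injective_projections; cbn [fst snd]; ring.
Qed.

Lemma Wp_scale p v lam : 1 < p -> 0 < lam -> Wp p v -> Wp p (lam * fst v, lam * snd v).
Proof.
  intros hp Hl [z [w Hv]].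
  set (k := Rpower lam (/p)).
  assert (Hk : 0 < k) by apply exp_pos.
  exists (Cmult (RtoC k) z), (Cmult (RtoC k) w).
  rewrite !Fp_scale by auto.
  assert (E : lam = k * Rpower k (p-1)).
  { rewrite Rpower_shift by auto. unfold k. rewrite Rpower_mult. replace (/p * (p-1+1)) with 1 by (field; lra).
    rewrite Rpower_1; auto. }
  rewrite Hv, E. clear Hv E.
  destruct (Fp p z) as [f1 f2], (Fp p w) as [g1 g2], z as [z1 z2], w as [w1 w2].
  unfold Cminus, Cmult, Cconj, Cplus, Copp, RtoC; cbn [fst snd].
  apply injective_projections; cbn [fst snd]; ring.
Qed.

Lemma Nder p t : is_derive (fun e => Rpower (Cmod (1+e, e*t)) (p-2)) 0 (p-2).
Proof.
  unfold Rpower, Cmod. cbn [fst snd]. auto_derive;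
  replace ((1 + 0) * ((1 + 0) * 1) + 0 * t * (0 * t * 1)) with 1 by ring; rewrite sqrt_1.
  - repeat split; lra.
  - rewrite ln_1, Rmult_0_r, exp_0. field.
Qed.

Lemma Cmod_le_sum x1 x2 : Cmod (x1, x2) <= Rabs x1 + Rabs x2.
Proof.
  unfold Cmod; cbn [fst snd].
  rewrite <- (sqrt_pow2 (Rabs x1 + Rabs x2)) by (pose proof (Rabs_pos x1); pose proof (Rabs_pos x2); lra).
  apply sqrt_le_1_alt. rewrite <- (pow2_abs x1), <- (pow2_abs x2).
  pose proof (Rabs_pos x1); pose proof (Rabs_pos x2).
  assert (0 <= Rabs x1 * Rabs x2) by (apply Rmult_le_pos; lra). nra.
Qed.

Lemma Rpower_1_base q : Rpower 1 q = 1.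
Proof. unfold Rpower. rewrite ln_1, Rmult_0_r, exp_0. reflexivity. Qed.

Lemma tmu p u1 u2 : 1 < p -> 0 < u1 -> 4*(p-1)*u2^2 <= (p-2)^2*u1^2 ->
  exists t mu, 0 < mu /\ (p-1) + t^2 = mu*u1 /\ (p-2)*t = mu*u2.
Proof.
  intros hp H1 H2.
  destruct (Req_dec u2 0) as [h|h].
  - exists 0, ((p-1)/u1). split; [apply Rdiv_lt_0_compat; lra|]. subst. split; [field|ring]; lra.
  - set (S := sqrt ((p-2)^2*u1^2 - 4*(p-1)*u2^2)).
    assert (HS : S^2 = (p-2)^2*u1^2 - 4*(p-1)*u2^2) by (unfold S; rewrite <- Rsqr_pow2, Rsqr_sqrt; lra).
    set (t := ((p-2)*u1 + S)/(2*u2)).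
    exists t, (((p-1) + t^2)/u1). split.
    { apply Rdiv_lt_0_compat; [pose proof (pow2_ge_0 t); lra| lra]. }
    split; [field; lra|].
    assert (HT : 2*u2*t = (p-2)*u1 + S) by (unfold t; field; lra).
    assert (Q : u2 * (u2*t^2 - (p-2)*u1*t + (p-1)*u2) = 0).
    { replace (u2 * (u2*t^2 - (p-2)*u1*t + (p-1)*u2)) with
        (((2*u2*t)^2 - 2*(p-2)*u1*(2*u2*t) + 4*(p-1)*u2^2)/4) by field.
      rewrite HT. replace (((p - 2) * u1 + S) ^ 2 - 2 * (p - 2) * u1 * ((p - 2) * u1 + S) + 4 * (p - 1) * u2 ^ 2)
        with (S^2 - (p-2)^2*u1^2 + 4*(p-1)*u2^2) by ring. rewrite HS. field. }
    apply Rmult_integral in Q. destruct Q as [Q|Q]; [contradiction|].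
    apply Rmult_eq_reg_r with u1; [|lra]. field_simplify; [|lra]. nra.
Qed.

Lemma approx p u : 1 < p -> Pp p u -> Cclosure (Wp p) u.
Proof.
  intros hp Hu eps0 He0.
  destruct (Ceq_dec u 0) as [h0|h0].
  - exists 0%C. split.
    + exists 0%C, 0%C. destruct (Fp_comp p 0%C) as [b [_ [Hb _]]]. rewrite Hb.
      unfold Cminus, Cmult, Cconj, Cplus, Copp, RtoC; cbn [fst snd].
      apply injective_projections; cbn [fst snd]; ring.
    + subst u. replace (Cminus 0 0) with (RtoC 0) by (apply injective_projections; unfold Cminus, Cplus, Copp, RtoC; cbn; ring).
      rewrite Cmod_0. lra.
  - pose proof (cc_facts p hp) as [Hc0 [Hc1 Hc2]].
    assert (Hm : 0 < Cmod u) by (apply Cmod_gt_0; exact h0).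
    assert (Hu1 : 0 < fst u) by (unfold Pp in Hu; assert (0 < cc p * Cmod u) by (apply Rmult_lt_0_compat; lra); lra).
    apply Pp_iff in Hu; auto. destruct Hu as [_ Hu].
    destruct u as [u1 u2]. cbn [fst snd] in *.
    destruct (tmu p u1 u2 hp Hu1 Hu) as [t [mu [Hmu [E1 E2]]]].
    set (q := p - 2) in *.
    set (K0 := 2 + t^2 + Rabs t + Rabs q * (1 + t^2)).
    assert (HK0 : 0 < K0) by (unfold K0; pose proof (pow2_ge_0 t); pose proof (Rabs_pos t);
      assert (0 <= Rabs q * (1+t^2)) by (apply Rmult_le_pos; [apply Rabs_pos| lra]); lra).
    set (eta := eps0 * mu / (2 * K0)).
    assert (Heta : 0 < eta) by (unfold eta; apply Rdiv_lt_0_compat; [apply Rmult_lt_0_compat|]; lra).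
    pose proof (proj1 (is_derive_Reals _ _ _) (Nder p t)) as HD.
    destruct (HD eta Heta) as [delta Hdelta].
    pose proof (cond_pos delta) as Hdp.
    set (e := Rmin (delta/2) (Rmin eta 1)).
    assert (He : 0 < e) by (unfold e; repeat apply Rmin_pos; lra).
    assert (He1 : e <= 1) by (unfold e; eapply Rle_trans; [apply Rmin_r| apply Rmin_r]).
    assert (He2 : e <= eta) by (unfold e; eapply Rle_trans; [apply Rmin_r| apply Rmin_l]).
    assert (He3 : e < delta) by (unfold e; eapply Rle_lt_trans; [apply Rmin_l| lra]).
    specialize (Hdelta e ltac:(lra) ltac:(rewrite Rabs_right; lra)).
    set (N := Rpower (Cmod (1 + e, e * t)) q) in *.
    rewrite Rplus_0_l in Hdelta. fold q in Hdelta. fold N in Hdelta.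
    replace (Rpower (Cmod (1 + 0, 0 * t)) q) with 1 in Hdelta
      by (replace (1+0, 0*t) with (RtoC 1) by (apply injective_projections; cbn; ring);
          rewrite Cmod_1, Rpower_1_base; reflexivity).
    set (d := (N - 1)/e - q) in *.
    assert (HN : N = 1 + e * (d + q)) by (unfold d; field; lra).
    set (w := (1 + e, e * t) : C).
    set (V := Cmult (Cminus w 1) (Cconj (Cminus (Fp p w) (Fp p 1)))).
    assert (HV : Wp p V) by (exists 1%C, w; reflexivity).
    exists (1/(e^2*mu) * fst V, 1/(e^2*mu) * snd V). split.
    + apply Wp_scale; auto. apply Rdiv_lt_0_compat; [lra|]. apply Rmult_lt_0_compat; [nra| lra].
    + destruct (Fp_comp p 1%C) as [b1 [_ [Hb1 Hb1']]].
      rewrite Hb1' in Hb1 by (intros E; injection E; lra). rewrite Cmod_1, Rpower_1_base in Hb1.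
      destruct (Fp_comp p w) as [bw [_ [Hbw Hbw']]].
      rewrite Hbw' in Hbw by (intros E; injection E; lra). fold q N in Hbw.
      unfold V. rewrite Hb1, Hbw. unfold w.
      unfold Cminus, Cmult, Cconj, Cplus, Copp, RtoC; cbn [fst snd].
      fold N.
      assert (U1 : u1 = (q + 1 + t^2)/mu) by (apply Rmult_eq_reg_l with mu; [|lra]; field_simplify; unfold q in *; lra).
      assert (U2 : u2 = q*t/mu) by (apply Rmult_eq_reg_l with mu; [|lra]; field_simplify; lra).
      match goal with |- Cmod (?a, ?b) < _ =>
        replace a with ((d + e*(d+q)*(1+t^2))/mu) by (rewrite U1, HN; field; lra);
        replace b with (t*d/mu) by (rewrite U2, HN; field; lra) end.
      eapply Rle_lt_trans; [apply Cmod_le_sum|].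
      unfold Rdiv. rewrite !Rabs_mult, (Rabs_right (/mu)) by (left; apply Rinv_0_lt_compat; lra).
      assert (Hd : Rabs d < eta) by exact Hdelta.
      assert (T1 : Rabs (d + e*(d+q)*(1+t^2)) <= Rabs d + e*(Rabs d + Rabs q)*(1+t^2)).
      { eapply Rle_trans; [apply Rabs_triang|]. rewrite !Rabs_mult.
        rewrite (Rabs_right e) by lra. rewrite (Rabs_right (1+t^2)) by (pose proof (pow2_ge_0 t); lra).
        apply Rplus_le_compat_l. apply Rmult_le_compat_r; [pose proof (pow2_ge_0 t); lra|].
        apply Rmult_le_compat_l; [lra| apply Rabs_triang]. }
      pose proof (Rabs_pos d). pose proof (Rabs_pos t). pose proof (Rabs_pos q). pose proof (pow2_ge_0 t).
      assert (T2 : e * Rabs d <= eta) by (apply Rle_trans with (1 * Rabs d); [apply Rmult_le_compat_r; lra| lra]).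
      assert (T3 : e * Rabs q <= eta * Rabs q) by (apply Rmult_le_compat_r; lra).
      assert (T4 : Rabs t * Rabs d <= Rabs t * eta) by (apply Rmult_le_compat_l; lra).
      assert (T5 : Rabs d + e*(Rabs d + Rabs q)*(1+t^2) + Rabs t * Rabs d < eta * K0).
      { unfold K0.
        assert (e*(Rabs d + Rabs q)*(1+t^2) <= eta * (1+t^2) + eta*Rabs q*(1+t^2)).
        { replace (e*(Rabs d + Rabs q)*(1+t^2)) with ((e*Rabs d + e*Rabs q)*(1+t^2)) by ring.
          replace (eta * (1+t^2) + eta*Rabs q*(1+t^2)) with ((eta + eta*Rabs q)*(1+t^2)) by ring.
          apply Rmult_le_compat_r; lra. }
        nra. }
      assert (T6 : eta * K0 * / mu = eps0 / 2) by (unfold eta; field; lra).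
      assert (Hmi : 0 < / mu) by (apply Rinv_0_lt_compat; lra).
      apply Rle_lt_trans with ((Rabs d + e*(Rabs d + Rabs q)*(1+t^2) + Rabs t * Rabs d) * / mu).
      * rewrite Rmult_plus_distr_r. apply Rplus_le_compat.
        -- apply Rmult_le_compat_r; lra.
        -- lra.
      * apply Rlt_le_trans with (eta * K0 * / mu); [apply Rmult_lt_compat_r; lra| lra].
Qed.

Theorem lemma2 (p : R) (hp : 1 < p) :
  forall u : C, Cclosure (Wp p) u <-> Sigma_p p u.
Proof.
  intros u. rewrite Sigma_iff by exact hp. split.
  - apply closure_P; exact hp.
  - apply approx; exact hp.
Qed.
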